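(* Let $\mathcal{G}=\{G_1,\dots,G_M\}$ be groups, let $\vec z\in\mathbb{R}^p$ have support contained in $\bigcup_{i=1}^MG_i$, let $k\ge k^*$ be positive integers, and let $\widehat{\vec w}=P_k^{\mathcal{G}}(\vec z)$ and $\vec w^*=P_{k^*}^{\mathcal{G}}(\vec z)$. Then \[ \|\widehat{\vec w}-\vec z\|_2^2\le\frac{M-k}{M-k^*}\,\|\vec w^*-\vec z\|_2^2. \]
   Context: $\|\vec w\|_0^{\mathcal{G}}$ is the minimum number of nonzero terms in a decomposition $\vec w=\sum_i\vec a_{G_i}$ with $\operatorname{supp}(\vec a_{G_i})\subseteq G_i$. Exact projection: $P_k^{\mathcal{G}}(\vec z)=\arg\min_{\vec w}\|\vec w-\vec z\|_2^2$ subject to $\|\vec w\|_0^{\mathcal{G}}\le k$. *)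

(* Defs.v *)
From HB Require Import structures.
From mathcomp Require Import all_boot all_order all_algebra.
From mathcomp Require Import reals.
Set Implicit Arguments. Unset Strict Implicit. Unset Printing Implicit Defensive.
Import Order.TTheory GRing.Theory Num.Theory.
Local Open Scope ring_scope.

Definition sqdist (R : realType) (p : nat) (w z : 'I_p -> R) : R :=
  \sum_(j < p) (w j - z j) ^+ 2.

Definition group_decomp (R : realType) (p M : nat) (G : 'I_M -> {set 'I_p})
  (w : 'I_p -> R) (a : 'I_M -> 'I_p -> R) : Prop :=
  (forall i j, j \notin G i -> a i j = 0) /\ (forall j, w j = \sum_(i < M) a i j).

Definition nnz_terms (R : realType) (p M : nat) (a : 'I_M -> 'I_p -> R) : nat :=
  #|[set i : 'I_M | [exists j : 'I_p, a i j != 0]]|.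

(* ||w||_0^G <= k : the minimum number of nonzero terms over all group
   decompositions of w is at most k, i.e. some decomposition has at most
   k nonzero terms. *)
Definition gnorm_le (R : realType) (p M : nat) (G : 'I_M -> {set 'I_p})
  (w : 'I_p -> R) (k : nat) : Prop :=
  exists a, group_decomp G w a /\ (nnz_terms a <= k)%N.

Definition is_proj (R : realType) (p M : nat) (G : 'I_M -> {set 'I_p})
  (k : nat) (z w : 'I_p -> R) : Prop :=
  gnorm_le G w k /\ forall v, gnorm_le G v k -> sqdist w z <= sqdist v z.

(* Main.v *)
Require Import Defs.
From HB Require Import structures.
From mathcomp Require Import all_boot all_order all_algebra.
From mathcomp Require Import reals.
From mathcomp Require Import ring lra zify.
Set Implicit Arguments. Unset Strict Implicit. Unset Printing Implicit Defensive.
Import Order.TTheory GRing.Theory Num.Theory.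
Local Open Scope ring_scope.


Definition gcover (p M : nat) (G : 'I_M -> {set 'I_p}) (S : {set 'I_M}) : {set 'I_p} :=
  \bigcup_(i in S) G i.

Definition res (R : realType) (p M : nat) (G : 'I_M -> {set 'I_p}) (z : 'I_p -> R)
  (S : {set 'I_M}) : R := \sum_(j | j \notin gcover G S) z j ^+ 2.

Lemma lemA (R : realType) (p M : nat) (G : 'I_M -> {set 'I_p}) (z w : 'I_p -> R) (n : nat) :
  gnorm_le G w n -> exists S : {set 'I_M}, (#|S| <= n)%N /\ res G z S <= sqdist w z.
Proof.
case=> a [[supp dec] nnz].
exists [set i : 'I_M | [exists j : 'I_p, a i j != 0]]; split; first exact: nnz.
rewrite /sqdist (bigID (fun j => j \notin gcover G [set i : 'I_M | [exists j : 'I_p, a i j != 0]])) /=.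
rewrite -[res _ _ _]addr0; apply: lerD; last by apply: sumr_ge0 => j _; apply: sqr_ge0.
rewrite le_eqVlt; apply/orP; left; apply/eqP; apply: eq_bigr => j hj.
have -> : w j = 0.
  rewrite dec; apply: big1 => i _.
  case: (boolP (i \in [set i : 'I_M | [exists j : 'I_p, a i j != 0]])) => hi.
    apply: supp; apply: contra hj => hG; apply/bigcupP; by exists i.
  move: hi; rewrite inE negb_exists => /forallP /(_ j); by rewrite negbK => /eqP.
by rewrite sub0r sqrrN.
Qed.

Lemma lemB (R : realType) (p M : nat) (G : 'I_M -> {set 'I_p}) (z w : 'I_p -> R) (k : nat)
  (S : {set 'I_M}) : is_proj G k z w -> (#|S| <= k)%N -> sqdist w z <= res G z S.
Proof.
case=> _ hmin hS.
pose v j := if j \in gcover G S then z j else 0.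
pose a (i : 'I_M) (j : 'I_p) := if [pick i0 in S | j \in G i0] == Some i then z j else 0.
have -> : res G z S = sqdist v z.
  rewrite /sqdist (bigID (fun j => j \in gcover G S)) /= big1 ?add0r.
    by apply: eq_bigr => j /negbTE hj; rewrite /v hj sub0r sqrrN.
  by move=> j hj; rewrite /v hj subrr expr0n.
apply: hmin; exists a; split; first split.
- move=> i j hj; rewrite /a; case: pickP => [i0 /andP [_ hi0]|_] //.
  case: ifP => // /eqP [e]; by rewrite -e hi0 in hj.
- move=> j; rewrite /v /a; case: pickP => [i0 /andP [h1 h2]|h].
    rewrite (bigD1 i0) //= eqxx big1 ?addr0.
      by have -> : j \in gcover G S by apply/bigcupP; exists i0.
    by move=> i hi; case: ifP => // /eqP [e]; rewrite e eqxx in hi.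
  rewrite big1; last by move=> i _.
  case: ifP => // /bigcupP [i0 h1 h2]; by move: (h i0); rewrite h1 h2.
- apply: leq_trans hS; apply: subset_leq_card; apply/subsetP => i.
  rewrite inE => /existsP [j]; rewrite /a; case: pickP => [i0 /andP [h1 _]|_].
    by case: ifP => [/eqP [<-] //|]; rewrite eqxx.
  by rewrite eqxx.
Qed.

Lemma res_ge0 (R : realType) (p M : nat) (G : 'I_M -> {set 'I_p}) (z : 'I_p -> R) (S : {set 'I_M}) :
  0 <= res G z S.
Proof. by apply: sumr_ge0 => j _; apply: sqr_ge0. Qed.

Lemma gcover_sub (p M : nat) (G : 'I_M -> {set 'I_p}) (S S' : {set 'I_M}) j :
  S \subset S' -> j \in gcover G S -> j \in gcover G S'.
Proof. move=> /subsetP sS /bigcupP [i hi hj]; apply/bigcupP; exists i => //; exact: sS. Qed.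

Lemma res_mono (R : realType) (p M : nat) (G : 'I_M -> {set 'I_p}) (z : 'I_p -> R) (S S' : {set 'I_M}) :
  S \subset S' -> res G z S' <= res G z S.
Proof.
move=> sS; rewrite /res [X in _ <= X]big_mkcond [X in X <= _]big_mkcond /=.
apply: ler_sum => j _.
case: (boolP (j \in gcover G S)) => h /=.
  by rewrite (gcover_sub sS h).
case: (j \notin gcover G S') => //; exact: sqr_ge0.
Qed.

Lemma pad (M : nat) (n : nat) (S : {set 'I_M}) :
  (#|S| <= n)%N -> (n <= M)%N -> exists S' : {set 'I_M}, S \subset S' /\ #|S'| = n.
Proof.
move=> h1 h2; have [d hd] : exists d, (n - #|S|)%N = d by eexists.
elim: d S h1 hd => [|d IH] S h1 hd.
  by exists S; split => //; apply/eqP; rewrite eqn_leq h1 -subn_eq0 hd.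
have hc : (0 < #|~: S|)%N.
  have := cardsC S; rewrite card_ord => e.
  have : (#|S| < M)%N by apply: leq_trans h2; rewrite -subn_gt0 hd.
  move: e; move: #|S| #|~: S| => u v ? ?; lia.
case/card_gt0P: hc => x; rewrite inE => hx.
have e1 : #|x |: S| = #|S|.+1 by rewrite cardsU1 hx.
have h1' : (#|x |: S| <= n)%N by rewrite e1; move: hd; move: #|S| => u ?; lia.
have hd' : (n - #|x |: S|)%N = d by rewrite e1; move: hd; move: #|S| => u ?; lia.
have [S' [s1 s2]] := IH (x |: S) h1' hd'.
exists S'; split => //; apply: subset_trans s1; exact: subsetUr.
Qed.

Lemma gcoverU1 (p M : nat) (G : 'I_M -> {set 'I_p}) (S : {set 'I_M}) i j :
  i \notin S -> (j \in gcover G (i |: S)) = (j \in G i) || (j \in gcover G S).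
Proof. by move=> hi; rewrite /gcover big_setU1 //= inE. Qed.

Lemma step (R : realType) (p M : nat) (G : 'I_M -> {set 'I_p}) (z : 'I_p -> R)
  (S : {set 'I_M}) (n : nat) :
  (forall j, z j != 0 -> exists i, j \in G i) -> #|S| = n -> (n < M)%N ->
  exists S' : {set 'I_M}, (#|S'| <= n.+1)%N /\
    (M%:R - n%:R) * res G z S' <= (M%:R - n%:R - 1) * res G z S.
Proof.
move=> hz hS hn.
pose c i := \sum_(j | (j \notin gcover G S) && (j \in G i)) z j ^+ 2.
have hsum : res G z S <= \sum_(i in ~: S) c i.
  have -> : \sum_(i in ~:S) c i = \sum_(j | j \notin gcover G S)
      \sum_(i in ~:S) (if j \in G i then z j ^+ 2 else 0).
    rewrite /c; under eq_bigr do rewrite big_mkcondr; exact: exchange_big.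
  apply: ler_sum => j hj; case: (eqVneq (z j) 0) => [->|nz].
    rewrite expr0n /=; apply: sumr_ge0 => i _; case: ifP => _ //; exact: sqr_ge0.
  have [i hi] := hz j nz.
  have iS : i \in ~: S.
    rewrite inE; apply: contra hj => iS; apply/bigcupP; by exists i.
  rewrite (bigD1 i) //= hi -[X in X <= _]addr0 lerD2l.
  apply: sumr_ge0 => i' _; case: ifP => _ //; exact: sqr_ge0.
have hcard : #|~: S| = (M - n)%N.
  have := cardsC S; rewrite card_ord hS => e; move: e; move: #|~: S| => u ?; lia.
have hMn : (M%:R - n%:R : R) = #|~: S|%:R by rewrite hcard natrB // ltnW.
have cge0 : forall i, 0 <= c i by move=> i; apply: sumr_ge0 => j _; exact: sqr_ge0.
have [i iS hi] : exists2 i, i \in ~: S & res G z S <= (M%:R - n%:R) * c i.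
  case: (boolP [exists i in ~: S, res G z S <= (M%:R - n%:R) * c i]).
    by move=> /existsP [i /andP [iS hi]]; exists i.
  rewrite negb_exists => /forallP hno; exfalso.
  have hc : (0 < #|~: S|)%N by rewrite hcard subn_gt0.
  case/card_gt0P: (hc) => x xS.
  have : \sum_(i in ~: S) (M%:R - n%:R) * c i < \sum_(i in ~: S) res G z S.
    apply: ltr_sum; first by apply/hasP; exists x => //; rewrite mem_index_enum.
    move=> i iS; move: (hno i); rewrite iS /= -ltNge; exact.
  rewrite -mulr_sumr sumr_const -[_ *+ #|~: S|]mulr_natr -hMn.
  have : 0 < (M%:R - n%:R : R) by rewrite hMn ltr0n.
  move: (M%:R - n%:R) hsum => t hs ht; rewrite ltNge => /negP; apply.
  by rewrite mulrC ler_pM2l.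
have iS' : i \notin S by rewrite inE in iS.
exists (i |: S); split; first by rewrite cardsU1 iS' hS.
have hres : res G z S = c i + res G z (i |: S).
  rewrite /res (bigID (fun j => j \in G i)) /=; congr (_ + _).
  apply: eq_bigl => j; by rewrite gcoverU1 // negb_or andbC.
rewrite hres in hi *; move: (res G z (i |: S)) (c i) (cge0 i) hi => r ci h0 h.
nra.
Qed.

Lemma iter (R : realType) (p M : nat) (G : 'I_M -> {set 'I_p}) (z : 'I_p -> R)
  (S0 : {set 'I_M}) (ks : nat) :
  (forall j, z j != 0 -> exists i, j \in G i) -> (#|S0| <= ks)%N ->
  forall d, (ks + d <= M)%N -> exists S : {set 'I_M}, (#|S| <= ks + d)%N /\
    (M%:R - ks%:R) * res G z S <= (M%:R - (ks + d)%:R) * res G z S0.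
Proof.
move=> hz h0; elim=> [|d IH] hM.
  by exists S0; rewrite addn0; split.
have hM' : (ks + d <= M)%N by move: hM; rewrite addnS => /ltnW.
have [S [hS1 hS2]] := IH hM'.
have [S1 [sub1 c1]] := pad hS1 hM'.
have hlt : (ks + d < M)%N by rewrite -addnS.
have [S2 [c2 h2]] := step hz c1 hlt.
exists S2; split; first by rewrite addnS.
have m1 : res G z S1 <= res G z S by apply: res_mono.
have r0 : 0 <= res G z S0 by apply: res_ge0.
have r1 : 0 <= res G z S1 by apply: res_ge0.
have r2 : 0 <= res G z S2 by apply: res_ge0.
have hks : (ks%:R : R) <= (ks + d)%:R by rewrite ler_nat leq_addr.
have hlt' : (ks + d)%:R + 1 <= (M%:R : R) by rewrite natr1 ler_nat.
rewrite addnS -natr1.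
move: (M%:R : R) (ks%:R : R) ((ks + d)%:R : R) (res G z S0) (res G z S) (res G z S1)
  (res G z S2) hS2 h2 m1 r0 r1 r2 hks hlt' => m k n x0 x x1 x2 H1 H2 H3 ? ? ? ? ?.
have ht : 0 < m - n by lra.
have hmk : 0 <= m - k by lra.
have hmn1 : 0 <= m - n - 1 by lra.
have A : (m - k) * ((m - n) * x2) <= (m - k) * ((m - n - 1) * x1).
  rewrite -subr_ge0 -mulrBr; apply: mulr_ge0 => //; rewrite subr_ge0 //.
have B : (m - n - 1) * ((m - k) * x1) <= (m - n - 1) * ((m - k) * x).
  rewrite -subr_ge0 -mulrBr; apply: mulr_ge0 => //; rewrite -mulrBr; apply: mulr_ge0 => //; rewrite subr_ge0 //.
have C : (m - n - 1) * ((m - k) * x) <= (m - n - 1) * ((m - n) * x0).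
  rewrite -subr_ge0 -mulrBr; apply: mulr_ge0 => //; rewrite subr_ge0 //.
suff : (m - n) * ((m - k) * x2) <= (m - n) * ((m - (n + 1)) * x0).
  by rewrite ler_pM2l.
have e1 : (m - n) * ((m - k) * x2) = (m - k) * ((m - n) * x2) by ring.
have e2 : (m - k) * ((m - n - 1) * x1) = (m - n - 1) * ((m - k) * x1) by ring.
have e3 : (m - n) * ((m - (n + 1)) * x0) = (m - n - 1) * ((m - n) * x0) by ring.
rewrite e1 e3; rewrite e2 in A; lra.
Qed.

Unset Implicit Arguments.
Theorem lemma6 (R : realType) (p M : nat) (G : 'I_M -> {set 'I_p})
  (z : 'I_p -> R) (k kstar : nat) (what wstar : 'I_p -> R) :
  (forall j, z j != 0 -> exists i, j \in G i) ->
  (0 < kstar)%N -> (kstar <= k)%N -> (k <= M)%N ->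
  is_proj G k z what -> is_proj G kstar z wstar ->
  sqdist what z <= ((M%:R - k%:R) / (M%:R - kstar%:R)) * sqdist wstar z.
Proof.
move=> hz hk0 hkk hkM hw hws.
case: (ltnP k M) => hkM'; last first.
  have eM : k = M by apply/eqP; rewrite eqn_leq hkM hkM'.
  rewrite eM subrr mul0r mul0r.
  apply: (le_trans (lemB (S := setT) hw _)); first by rewrite cardsT card_ord eM.
  rewrite /res big1 // => j hj.
  case: (eqVneq (z j) 0) => [->|nz]; first by rewrite expr0n.
  have [i hi] := hz j nz.
  by move: hj; have -> : j \in gcover G setT by apply/bigcupP; exists i; rewrite ?inE.
have [S0 [c0 h0]] := lemA z hws.1.
have hd : (kstar + (k - kstar) <= M)%N by rewrite subnKC.
have [S [c1 h1]] := iter hz c0 hd.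
rewrite subnKC // in c1 h1.
have hu : (0 : R) < M%:R - kstar%:R.
  by rewrite subr_gt0 ltr_nat; exact: leq_ltn_trans hkk hkM'.
have hv : (0 : R) <= M%:R - k%:R by rewrite subr_ge0 ler_nat.
apply: (le_trans (lemB hw c1)).
rewrite mulrAC ler_pdivlMr // mulrC.
apply: (le_trans h1); exact: ler_wpM2l hv _ _ h0.
Qed.
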